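(* Let $n>2k$ and $1\le s\le k$. Then $g(n,k,s)=|\mathcal K(n,k,s)|$, where $$\mathcal K(n,k,s)=\Big\{K\in\binom{[n]}{k}:1\in K,\ |K\cap[2,k+s-1]|\ge s-1\Big\}\cup\binom{[2,k+s-1]}{k}.$$
   Context: $[a,b]=\{a,\dots,b\}$. A family is intersecting if any two members intersect. $\tau(\mathcal F)$ is the minimum size of a set meeting every member of $\mathcal F$. Writing sets increasingly, $(a_1,\dots,a_k)\prec(b_1,\dots,b_k)$ iff $a_i\le b_i$ for all $i$; $\mathcal F\subset\binom{[n]}{k}$ is initial if $A\prec B\in\mathcal F$ implies $A\in\mathcal F$. $g(n,k,s)=\max\{|\mathcal F|:\mathcal F\subset\binom{[n]}{k}\text{ intersecting, initial, }\tau(\mathcal F)\ge s\}$. *)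

(* Defs.v *)
From mathcomp Require Import all_boot.
Set Implicit Arguments. Unset Strict Implicit. Unset Printing Implicit Defensive.

(* Ground set [n] = {1,...,n} is modelled by 'I_n, the ordinal x standing
   for the integer label x.+1. *)

Definition lab (n : nat) (x : 'I_n) : nat := x.+1.

Definition incr (n : nat) (A : {set 'I_n}) : seq nat :=
  sort leq [seq lab x | x <- enum A].

Definition prec (n : nat) (A B : {set 'I_n}) : bool :=
  all2 leq (incr A) (incr B).

Definition family_k (n k : nat) (F : {set {set 'I_n}}) : bool :=
  [forall A in F, #|A| == k].

Definition intersecting (n : nat) (F : {set {set 'I_n}}) : bool :=
  [forall A in F, forall B in F, A :&: B != set0].

Definition initial (n k : nat) (F : {set {set 'I_n}}) : bool :=
  [forall A : {set 'I_n}, forall B in F, ((#|A| == k) && prec A B) ==> (A \in F)].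

Definition transversal (n : nat) (F : {set {set 'I_n}}) (T : {set 'I_n}) : bool :=
  [forall A in F, T :&: A != set0].

(* tau(F): minimum size of a set meeting every member of F
   (n.+1 plays the role of +infinity if no such set exists) *)
Definition tau (n : nat) (F : {set {set 'I_n}}) : nat :=
  \big[minn/n.+1]_(T : {set 'I_n} | transversal F T) #|T|.

Definition admissible (n k s : nat) (F : {set {set 'I_n}}) : bool :=
  [&& family_k k F, intersecting F, initial k F & s <= tau F].

Definition g (n k s : nat) : nat :=
  \max_(F : {set {set 'I_n}} | admissible k s F) #|F|.

Definition itv (n a b : nat) : {set 'I_n} := [set x : 'I_n | a <= lab x <= b].

Definition Kfam (n k s : nat) : {set {set 'I_n}} :=
  [set K : {set 'I_n} | (#|K| == k) &&
     ((([exists x in K, lab x == 1]) && (s - 1 <= #|K :&: itv n 2 (k + s - 1)|))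
      || (K \subset itv n 2 (k + s - 1)))].

(* Main.v *)
Require Import Defs.
From mathcomp Require Import all_boot.
From mathcomp Require Import zify.
Set Implicit Arguments. Unset Strict Implicit. Unset Printing Implicit Defensive.

Definition inA {n} (A : {set 'I_n}) (i : nat) : bool := [exists v in A, val v == i].
Definition ct {n} (A : {set 'I_n}) (x : nat) : nat := count (inA A) (iota 0 x).

Lemma ct0 n (A : {set 'I_n}) : ct A 0 = 0.
Proof. by []. Qed.

Lemma ctS n (A : {set 'I_n}) x : ct A x.+1 = ct A x + inA A x.
Proof. by rewrite /ct -addn1 iotaD count_cat /= addn0. Qed.

Lemma inA_val n (A : {set 'I_n}) (v : 'I_n) : inA A v = (v \in A).
Proof.
apply/existsP/idP => [[w /andP[wA /eqP /val_inj <-]] //| vA].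
by exists v; rewrite vA eqxx.
Qed.

Lemma inA_lt n (A : {set 'I_n}) i : inA A i -> i < n.
Proof. by case/existsP=> v /andP[_ /eqP <-]; apply: ltn_ord. Qed.

Lemma inA_set n (P : nat -> bool) i :
  inA [set v : 'I_n | P (val v)] i = (i < n) && P i.
Proof.
apply/existsP/andP => [[v /andP[]]|[lt Pi]].
  by rewrite inE => Pv /eqP <-; rewrite ltn_ord.
by exists (Ordinal lt); rewrite inE Pi eqxx.
Qed.

Lemma card_count n (A : {set 'I_n}) : #|A| = count (mem A) (enum 'I_n).
Proof. rewrite cardE /enum_mem size_filter; congr count.
by rewrite /enum_mem [RHS](eq_filter (a2 := predT)) ?filter_predT. Qed.

Lemma ct_card n (A : {set 'I_n}) : ct A n = #|A|.
Proof.
rewrite /ct -val_enum_ord count_map card_count.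
by apply: eq_count => v /=; rewrite inA_val.
Qed.

Lemma inA_ge n (A : {set 'I_n}) i : n <= i -> inA A i = false.
Proof. by move=> h; case H: (inA A i) => //; have := inA_lt H; rewrite ltnNge h. Qed.

Lemma ct_big n (A : {set 'I_n}) x : n <= x -> ct A x = #|A|.
Proof.
move=> h; rewrite -(subnKC h) /ct iotaD count_cat -/(ct A n) ct_card.
rewrite (@eq_in_count _ _ pred0) ?count_pred0 ?addn0 // => y.
by rewrite mem_iota add0n => /andP[ny _]; rewrite inA_ge.
Qed.

Lemma ct_mono n (A : {set 'I_n}) x y : x <= y -> ct A x <= ct A y.
Proof.
move=> /subnK <-; elim: (y - x) => [|d IH] //.
by rewrite addSn ctS (leq_trans IH) // leq_addr.
Qed.

Lemma ct_le_card n (A : {set 'I_n}) x : ct A x <= #|A|.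
Proof.
case: (leqP x n) => h; last by rewrite ct_big // ltnW.
by rewrite -ct_card ct_mono.
Qed.

Lemma ct_le n (A : {set 'I_n}) x : ct A x <= x.
Proof. by rewrite /ct (leq_trans (count_size _ _)) // size_iota. Qed.

Lemma ct_sub n (A B : {set 'I_n}) x : A \subset B -> ct A x <= ct B x.
Proof.
move=> sAB; elim: x => // x IH; rewrite !ctS leq_add //.
case hA: (inA A x) => //; case/existsP: hA => v /andP[vA /eqP <-].
by rewrite inA_val (subsetP sAB).
Qed.

Lemma count_big_zero (s : seq nat) y x :
  all (ltn y) s -> x <= y -> count (fun t => t <= x) s = 0.
Proof.
elim: s => //= t s IH /andP[yt hs] xy; rewrite IH // addn0.
suff -> : (t <= x) = false by [].
by apply/negbTE; rewrite -ltnNge (leq_ltn_trans xy yt).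
Qed.

Lemma all2_count (a b : seq nat) :
  all2 leq a b -> forall x, count (fun t => t <= x) b <= count (fun t => t <= x) a.
Proof.
elim: a b => [|y a IH] [|z b] //= /andP[yz hab] x.
apply: leq_add; last exact: IH.
by case: (leqP z x) => // zx; rewrite (leq_trans yz zx).
Qed.

Lemma all2_size (a b : seq nat) : all2 leq a b -> size a = size b.
Proof. by elim: a b => [|y a IH] [|z b] //= /andP[_ /IH ->]. Qed.

Lemma count_all2 (a b : seq nat) :
  sorted ltn a -> sorted ltn b -> size a = size b ->
  (forall x, count (fun t => t <= x) b <= count (fun t => t <= x) a) ->
  all2 leq a b.
Proof.
elim: a b => [|y a IH] [|z b] //= sa sb [hs] hc.
have ha : all (ltn y) a by apply: (order_path_min ltn_trans sa).
have hb : all (ltn z) b by apply: (order_path_min ltn_trans sb).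
have yz : y <= z.
  case: (leqP y z) => // zy; have := hc z.
  rewrite leqnn (count_big_zero ha (ltnW zy)) /=.
  have -> : (y <= z) = false by apply/negbTE; rewrite -ltnNge.
  by [].
rewrite yz /=; apply: IH => //.
- exact: path_sorted sa.
- exact: path_sorted sb.
move=> x; have := hc x; case: (leqP z x) => zx.
  by rewrite (leq_trans yz zx) /= !add1n ltnS.
by rewrite (count_big_zero hb (ltnW zx)).
Qed.

Lemma count_leS (s : seq nat) x :
  count (fun t => t <= x.+1) s = count (fun t => t <= x) s + count_mem x.+1 s.
Proof.
elim: s => //= t s ->; rewrite leq_eqVlt ltnS.
case: (t =P x.+1) => [->|_] /=; first by rewrite ltnn; lia.
lia.
Qed.

Lemma incr_uniq n (A : {set 'I_n}) : uniq (incr A).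
Proof.
rewrite /incr sort_uniq map_inj_uniq ?enum_uniq //.
by move=> u v /succn_inj /val_inj.
Qed.

Lemma incr_sorted n (A : {set 'I_n}) : sorted ltn (incr A).
Proof. by rewrite ltn_sorted_uniq_leq incr_uniq sort_sorted //; exact: leq_total. Qed.

Lemma mem_incr n (A : {set 'I_n}) y : (y \in incr A) = (0 < y) && inA A y.-1.
Proof.
rewrite /incr mem_sort; apply/mapP/andP => [[v vA ->]|[y0 /existsP[v /andP[vA /eqP vy]]]].
  by rewrite /lab /= inA_val; rewrite mem_enum in vA.
by exists v; rewrite ?mem_enum // /lab vy prednK.
Qed.

Lemma count_incr n (A : {set 'I_n}) x : count (fun t => t <= x) (incr A) = ct A x.
Proof.
elim: x => [|x IH].
  apply/eqP; rewrite -leqn0 (leq_trans _ (leqnn 0)) //.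
  rewrite leqn0 eqn0Ngt -has_count; apply/hasPn => y; rewrite mem_incr.
  by case: y.
by rewrite count_leS IH ctS count_uniq_mem ?incr_uniq // mem_incr.
Qed.

Lemma size_incr n (A : {set 'I_n}) : size (incr A) = #|A|.
Proof. by rewrite /incr size_sort size_map cardE. Qed.

Lemma precP n (A B : {set 'I_n}) :
  prec A B <-> #|A| = #|B| /\ forall x, ct B x <= ct A x.
Proof.
split.
  move=> h; split; first by rewrite -!size_incr; apply: all2_size.
  by move=> x; rewrite -!count_incr; apply: all2_count.
case=> hs hc; apply: count_all2; rewrite ?incr_sorted ?size_incr //.
by move=> x; rewrite !count_incr.
Qed.

Lemma inA_ord n (A : {set 'I_n}) i (h : i < n) : inA A i = (Ordinal h \in A).
Proof. by rewrite -inA_val. Qed.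

Lemma inA_setP n (P : nat -> bool) (A : {set 'I_n}) :
  (forall v : 'I_n, (v \in A) = P v) -> forall i, inA A i = (i < n) && P i.
Proof.
move=> h i; case: (ltnP i n) => lt; last by rewrite inA_ge.
by rewrite (inA_ord _ lt) h.
Qed.

Lemma ct_setT n x : ct [set: 'I_n] x = minn x n.
Proof.
elim: x => [|x IH]; first by rewrite ct0 min0n.
rewrite ctS IH (@inA_setP _ (fun _ => true)) => [|v]; last by rewrite inE.
rewrite andbT; lia.
Qed.

Lemma ct_interval n (A C : {set 'I_n}) a b :
  (forall i, inA C i = inA A i && (a <= i < b)) -> a <= b ->
  forall x, ct C x = ct A (minn (maxn x a) b) - ct A a.
Proof.
move=> hC ab; elim=> [|x IH].
  by rewrite ct0 max0n (minn_idPl ab) subnn.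
rewrite ctS IH hC.
case: (ltnP x a) => xa.
  have -> : minn (maxn x.+1 a) b = a by lia.
  by rewrite (minn_idPl ab) subnn andbF.
case: (ltnP x b) => xb.
  have -> : minn (maxn x.+1 a) b = x.+1 by lia.
  rewrite ctS !andbT.
  have := ct_mono A xa; lia.
have -> : minn (maxn x.+1 a) b = b by lia.
by rewrite !andbF addn0.
Qed.

Lemma firstK n (S : {set 'I_n}) k : k <= #|S| ->
  exists D : {set 'I_n}, [/\ D \subset S, #|D| = k & forall x, ct D x = minn k (ct S x)].
Proof.
move=> kS; exists [set v : 'I_n | inA S v && (ct S v < k)].
have hD : forall i, inA [set v : 'I_n | inA S v && (ct S v < k)] i = inA S i && (ct S i < k).
  move=> i; rewrite (@inA_setP _ (fun i => inA S i && (ct S i < k))) => [|v]; last by rewrite inE.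
  by case h: (inA S i); rewrite ?andbF // (inA_lt h).
have hc : forall x, ct [set v : 'I_n | inA S v && (ct S v < k)] x = minn k (ct S x).
  elim=> [|x IH]; first by rewrite !ct0 minn0.
  rewrite !ctS IH hD.
  case: (inA S x) => /=; lia.
split => //.
  by apply/subsetP => v; rewrite inE -inA_val => /andP[].
by rewrite -ct_card hc ct_card; lia.
Qed.

Lemma initialP n k (F : {set {set 'I_n}}) (A B : {set 'I_n}) :
  initial k F -> #|A| = k -> prec A B -> B \in F -> A \in F.
Proof.
move=> iF hA hp hB; move/forallP: iF => /(_ A) /forall_inP /(_ B hB) /implyP; apply.
by rewrite hA eqxx hp.
Qed.

Lemma interP n (F : {set {set 'I_n}}) (A B : {set 'I_n}) :
  intersecting F -> A \in F -> B \in F -> A :&: B != set0.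
Proof.
by move=> /forall_inP iF hA hB; move: (iF A hA) => /forall_inP; apply.
Qed.

Lemma find_sub n k (F : {set {set 'I_n}}) (B S : {set 'I_n}) :
  initial k F -> B \in F -> #|B| = k -> (forall x, ct B x <= ct S x) ->
  exists2 D, D \in F & D \subset S.
Proof.
move=> iF BF cB hc.
have kS : k <= #|S| by rewrite -cB -ct_card -(ct_card S).
have [D [DS cD hD]] := firstK kS.
exists D => //; apply: (initialP iF cD _ BF).
apply/precP; split; first by rewrite cD cB.
move=> x; rewrite hD; have := ct_le_card B x; have := hc x; lia.
Qed.

Definition B0 n k s : {set 'I_n} := [set v : 'I_n | (s - 1 <= v) && (v < k + s - 1)].

Lemma ct_B0 n k s x : 1 <= s -> k + s - 1 <= n ->
  ct (B0 n k s) x = minn (maxn x (s - 1)) (k + s - 1) - (s - 1).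
Proof.
move=> s1 mn.
have h : forall i, inA (B0 n k s) i = inA [set: 'I_n] i && (s - 1 <= i < k + s - 1).
  move=> i; rewrite (@inA_setP _ (fun i => (s - 1 <= i) && (i < k + s - 1))) => [|v]; last by rewrite inE.
  by rewrite (@inA_setP _ (fun _ => true)) ?andbT // => v; rewrite inE.
rewrite (ct_interval h) ?ct_setT; lia.
Qed.

Lemma card_B0 n k s : 1 <= s -> k + s - 1 <= n -> #|B0 n k s| = k.
Proof. by move=> s1 mn; rewrite -ct_card ct_B0 //; lia. Qed.

Lemma lemmaU n k s (F : {set {set 'I_n}}) (X : {set 'I_n}) :
  1 <= s -> k + s - 1 <= n -> initial k F -> B0 n k s \in F ->
  ct X (k + s - 1) <= s - 1 -> exists2 D, D \in F & D :&: X = set0.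
Proof.
move=> s1 mn iF BF hX.
set m := k + s - 1 in mn hX *.
pose S := [set v : 'I_n | (v < m) && ~~ inA X v].
have hS : forall i, inA S i = (i < n) && ((i < m) && ~~ inA X i).
  by apply: inA_setP => v; rewrite inE.
have lo : forall x, x <= m -> ct S x + ct X x = x.
  elim=> // x IH xm; rewrite !ctS hS (leq_trans xm mn) xm /=.
  have := IH (ltnW xm); case: (inA X x) => /=; lia.
have hi : forall d, ct S (m + d) = ct S m.
  elim=> [|d IH]; first by rewrite addn0.
  by rewrite addnS ctS IH hS (ltnNge (m + d) m) leq_addr /= !andbF addn0.
have [D DF DS] : exists2 D, D \in F & D \subset S.
  apply: (find_sub iF BF (card_B0 s1 mn)) => x.
  rewrite ct_B0 // -/m.
  case: (leqP x m) => xm.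
    have := lo x xm; have := ct_mono X xm; lia.
  rewrite -(subnKC (ltnW xm)) hi; have := lo m (leqnn m); lia.
exists D => //; apply/setP => v; rewrite !inE.
case vD: (v \in D) => //=; have := subsetP DS v vD.
by rewrite inE -inA_val => /andP[_ /negbTE].
Qed.

Definition N0 n (X : {set 'I_n}) : nat := \max_(i < n.+1 | ct X i * 2 == i) i.

Lemma N0_spec n (X : {set 'I_n}) : ct X (N0 X) * 2 = N0 X /\ N0 X <= n.
Proof.
rewrite /N0 (bigmax_eq_arg ord0) ?ct0 //.
by case: arg_maxnP => [|i /eqP Pi _]; rewrite ?ct0 // -ltnS ltn_ord.
Qed.

Lemma N0_max n (X : {set 'I_n}) N : N <= n -> ct X N * 2 = N -> N <= N0 X.
Proof.
move=> Nn hN; rewrite /N0.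
have := @leq_bigmax_cond _ (fun i : 'I_n.+1 => ct X i * 2 == i) (fun i => nat_of_ord i) (Ordinal (Nn : N < n.+1)).
by rewrite /= hN eqxx; apply.
Qed.

Lemma ivt n (X : {set 'I_n}) : #|X| * 2 < n ->
  forall d N, N + d = n -> N <= ct X N * 2 -> exists2 N', N <= N' <= n & ct X N' * 2 = N'.
Proof.
move=> hX; elim=> [|d IH] N hN hle.
  by move: hle; rewrite addn0 in hN; rewrite hN ct_card; lia.
case: (ltngtP N (ct X N * 2)) => h.
- have e1 : N.+1 + d = n by rewrite addSnnS.
  have e2 : N.+1 <= ct X N.+1 * 2 by have := ct_mono X (leqnSn N); lia.
  have [N' /andP[h1 h2] h3] := IH N.+1 e1 e2.
  by exists N' => //; rewrite (ltnW h1) h2.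
- by move: hle; rewrite leqNgt h.
- by exists N; rewrite // leqnn -hN leq_addr.
Qed.

Lemma N0_tail n (X : {set 'I_n}) N : #|X| * 2 < n -> N0 X < N -> N <= n -> ct X N * 2 < N.
Proof.
move=> hX lt Nn; rewrite ltnNge; apply/negP => hle.
have [N' /andP[h1 h2] h3] := ivt hX (subnKC Nn) hle.
have := N0_max h2 h3; lia.
Qed.

Definition psi n (X : {set 'I_n}) : {set 'I_n} := [set v : 'I_n | (v < N0 X) != inA X v].

Lemma inA_psi n (X : {set 'I_n}) i : inA (psi X) i = (i < n) && ((i < N0 X) != inA X i).
Proof. by apply: (@inA_setP _ (fun i => (i < N0 X) != inA X i)) => v; rewrite inE. Qed.

Lemma ct_psi_lo n (X : {set 'I_n}) x : x <= N0 X -> ct (psi X) x + ct X x = x.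
Proof.
have [_ hn] := N0_spec X.
elim: x => // x IH hx; rewrite !ctS inA_psi hx (leq_trans hx hn) /=.
have := IH (ltnW hx); case: (inA X x) => /=; lia.
Qed.

Lemma ct_psi_hi n (X : {set 'I_n}) x : N0 X <= x -> ct (psi X) x = ct X x.
Proof.
have [h0 hn] := N0_spec X.
move=> /subnKC <-; elim: (x - N0 X) => [|d IH].
  by rewrite addn0; have := ct_psi_lo (leqnn (N0 X)); lia.
rewrite addnS !ctS IH inA_psi (ltnNge (N0 X + d) (N0 X)) leq_addr /=.
by case h: (inA X _); rewrite ?andbF // (inA_lt h).
Qed.

Lemma N0_psi n (X : {set 'I_n}) : N0 (psi X) = N0 X.
Proof.
rewrite {1}/N0; apply: eq_bigl => i.
case: (leqP i (N0 X)) => h.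
  have e := ct_psi_lo h; apply/eqP/eqP => ?; lia.
by rewrite ct_psi_hi // ltnW.
Qed.

Lemma psiK n (X : {set 'I_n}) : psi (psi X) = X.
Proof.
apply/setP => v; rewrite inE N0_psi inA_val inE inA_val.
by case: (v < N0 X); case: (v \in X).
Qed.

Lemma card_psi n (X : {set 'I_n}) : #|psi X| = #|X|.
Proof. have [_ hn] := N0_spec X; by rewrite -!ct_card ct_psi_hi. Qed.

Lemma psi_notin n k (F : {set {set 'I_n}}) (X : {set 'I_n}) :
  k * 2 < n -> initial k F -> intersecting F -> X \in F -> #|X| = k -> psi X \notin F.
Proof.
move=> kn iF itF XF cX.
have [h0 hn] := N0_spec X.
set N := N0 X in h0 hn *.
have hN2k : N <= k * 2 by have := ct_le_card X N; lia.
pose G1 := [set v : 'I_n | if v < N then inA X v else (v < k * 2) && odd v].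
pose H1 := [set v : 'I_n | if v < N then ~~ inA X v else (v < k * 2) && ~~ odd v].
have iG : forall i, inA G1 i = (i < n) && (if i < N then inA X i else (i < k * 2) && odd i).
  by apply: (@inA_setP _ (fun i => if i < N then inA X i else (i < k * 2) && odd i)) => v; rewrite inE.
have iH : forall i, inA H1 i = (i < n) && (if i < N then ~~ inA X i else (i < k * 2) && ~~ odd i).
  by apply: (@inA_setP _ (fun i => if i < N then ~~ inA X i else (i < k * 2) && ~~ odd i)) => v; rewrite inE.
have G_lo : forall x, x <= N -> ct G1 x = ct X x.
  elim=> // x IH hx; rewrite !ctS iG hx (leq_trans hx hn) IH ?(ltnW hx) //.
have H_lo : forall x, x <= N -> ct H1 x + ct X x = x.
  elim=> // x IH hx; rewrite !ctS iH hx (leq_trans hx hn) /=.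
  have := IH (ltnW hx); case: (inA X x) => /=; lia.
have G_hi : forall d, ct G1 (N + d) * 2 + odd (minn (N + d) (k * 2)) = minn (N + d) (k * 2).
  elim=> [|d IH].
    rewrite addn0 G_lo //; lia.
  rewrite addnS ctS iG (ltnNge (N + d) N) leq_addr /=.
  case: (ltnP (N + d) (k * 2)) => h; last by move: IH; lia.
  rewrite (ltn_trans h kn) /=; move: IH; lia.
have H_hi : forall d, ct H1 (N + d) * 2 = minn (N + d) (k * 2) + odd (minn (N + d) (k * 2)).
  elim=> [|d IH].
    rewrite addn0; have := H_lo N (leqnn N); lia.
  rewrite addnS ctS iH (ltnNge (N + d) N) leq_addr /=.
  case: (ltnP (N + d) (k * 2)) => h; last by move: IH; lia.
  rewrite (ltn_trans h kn) /=; move: IH; lia.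
have cG : #|G1| = k.
  by rewrite -ct_card; have := G_hi (n - N); rewrite (subnKC hn); lia.
have cH : #|H1| = k.
  by rewrite -ct_card; have := H_hi (n - N); rewrite (subnKC hn); lia.
have bnd : forall x, N < x -> ct X x * 2 <= minn x (k * 2).
  move=> x hx; have := ct_le_card X x; rewrite cX.
  case: (leqP x n) => xn.
    have := N0_tail (n:=n) (X:=X) (N:=x); rewrite cX => /(_ kn hx xn); lia.
  lia.
have pG : prec G1 X.
  apply/precP; split; first by rewrite cG cX.
  move=> x; case: (leqP x N) => hx; first by rewrite G_lo.
  have := bnd x hx; have := G_hi (x - N); rewrite (subnKC (ltnW hx)); lia.
have pH : prec H1 (psi X).
  apply/precP; split; first by rewrite cH card_psi cX.
  move=> x; case: (leqP x N) => hx.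
    have := ct_psi_lo hx; have := H_lo x hx; lia.
  rewrite ct_psi_hi ?(ltnW hx) //.
  have := bnd x hx; have := H_hi (x - N); rewrite (subnKC (ltnW hx)); lia.
apply/negP => pF.
have G1F := initialP iF cG pG XF.
have H1F := initialP iF cH pH pF.
have := interP itF G1F H1F.
suff -> : G1 :&: H1 = set0 by rewrite eqxx.
apply/setP => v; rewrite !inE.
by case: (v < N); case: (inA X v); case: (odd v); case: (v < k * 2).
Qed.

Lemma N0_pos n k (F : {set {set 'I_n}}) (X : {set 'I_n}) :
  k * 2 < n -> initial k F -> intersecting F -> X \in F -> #|X| = k -> 0 < N0 X.
Proof.
move=> kn iF itF XF cX; rewrite lt0n; apply/negP => /eqP h0.
have := psi_notin kn iF itF XF cX.
suff -> : psi X = X by rewrite XF.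
by apply/setP => v; rewrite inE h0 ltn0 inA_val; case: (v \in X).
Qed.

Lemma ct_UI n (A B : {set 'I_n}) x : ct A x + ct B x = ct (A :|: B) x + ct (A :&: B) x.
Proof.
elim: x => // x IH; rewrite !ctS.
case: (ltnP x n) => h; last by rewrite !inA_ge //; lia.
rewrite !(inA_ord _ h) !inE -!(inA_ord _ h).
by case: (inA A x); case: (inA B x) => /=; lia.
Qed.

Lemma ct_set0 n x : ct (set0 : {set 'I_n}) x = 0.
Proof.
elim: x => // x IH; rewrite ctS IH.
case: (ltnP x n) => h; last by rewrite inA_ge.
by rewrite (inA_ord _ h) inE.
Qed.

Lemma ct_disj n (A B : {set 'I_n}) x : A :&: B = set0 -> ct A x + ct B x <= x.
Proof. by move=> h; rewrite ct_UI h ct_set0 addn0 ct_le. Qed.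

Lemma ct1 n (A : {set 'I_n}) : ct A 1 = inA A 0.
Proof. by rewrite ctS ct0. Qed.

Lemma card_itv n (K : {set 'I_n}) m : 1 <= m -> m <= n ->
  #|K :&: itv n 2 m| = ct K m - inA K 0.
Proof.
move=> m1 mn.
have h : forall i, inA (K :&: itv n 2 m) i = inA K i && (1 <= i < m).
  move=> i; case: (ltnP i n) => lt; last by rewrite !inA_ge.
  by rewrite !(inA_ord _ lt) !inE /lab /=.
by rewrite -ct_card (ct_interval h m1) -ct1; congr (ct K _ - _); lia.
Qed.

Lemma sub_card n (A B : {set 'I_n}) : (A \subset B) = (#|A :&: B| == #|A|).
Proof.
apply/idP/eqP => [/setIidPl -> //|h].
apply/setIidPl/eqP; by rewrite eqEcard subsetIl h leqnn.
Qed.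

Lemma ex_lab1 n (K : {set 'I_n}) : [exists x in K, lab x == 1] = inA K 0.
Proof. by apply: eq_existsb => x; rewrite /lab eqSS. Qed.

Lemma KfamE n k s (K : {set 'I_n}) : 1 <= k + s - 1 -> k + s - 1 <= n ->
  (K \in Kfam n k s) =
  (#|K| == k) && ((inA K 0 && (s - 1 <= ct K (k + s - 1) - inA K 0))
                  || (ct K (k + s - 1) - inA K 0 == #|K|)).
Proof.
by move=> m1 mn; rewrite /Kfam inE ex_lab1 sub_card card_itv.
Qed.

Lemma tau_le n (F : {set {set 'I_n}}) T : Defs.transversal F T -> tau F <= #|T|.
Proof.
move=> hT; rewrite /tau.
have : T \in index_enum {set 'I_n} by rewrite mem_index_enum.
elim: (index_enum _) => // a r IH; rewrite inE big_cons.
case/orP => [/eqP <-|/IH h]; first by rewrite hT geq_minl.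
by case: ifP => // _; rewrite (leq_trans (geq_minr _ _) h).
Qed.

Lemma tau_ge n (F : {set {set 'I_n}}) s :
  s <= n.+1 -> (forall T, Defs.transversal F T -> s <= #|T|) -> s <= tau F.
Proof.
move=> sn hT; rewrite /tau; apply: (big_ind (fun x => s <= x)) => //.
by move=> x y hx hy; rewrite leq_min hx hy.
Qed.

Lemma inA_B0_0 n k s : 1 <= s -> k + s - 1 <= n -> 1 <= k ->
  inA (B0 n k s) 0 = (s == 1).
Proof.
move=> s1 mn k1.
rewrite (@inA_setP _ (fun i => (s - 1 <= i) && (i < k + s - 1))) => [|v]; last by rewrite inE.
apply/idP/eqP => [/andP[_ /andP[h _]]|->]; first by lia.
apply/andP; split; first by lia.
by apply/andP; split; lia.
Qed.

Lemma Kfam_adm n k s : 2 * k < n -> 1 <= s -> s <= k -> admissible k s (Kfam n k s).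
Proof.
move=> kn s1 sk.
have m1 : 1 <= k + s - 1 by lia.
have mn : k + s - 1 <= n by lia.
have KE := fun K => @KfamE n k s K m1 mn.
have B0K : B0 n k s \in Kfam n k s.
  rewrite KE card_B0 // eqxx /= inA_B0_0 //; last by lia.
  rewrite ct_B0 //.
  case: (s =P 1) => [->|hs] /=; first by lia.
  apply/eqP; lia.
have iK : initial k (Kfam n k s).
  apply/forallP => A; apply/forall_inP => B; rewrite !KE => /andP[/eqP cB hB].
  apply/implyP => /andP[/eqP cA /precP[_ hc]].
  rewrite cA eqxx /=; have := hc 1; have := hc (k + s - 1); rewrite !ct1.
  have := ct_le_card A (k + s - 1); rewrite cA.
  rewrite cB in hB; move: hB; lia.
rewrite /admissible; apply/and4P; split => //.
- by apply/forall_inP => A; rewrite KE => /andP[].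
- apply/forall_inP => A hA; apply/forall_inP => B hB; apply/negP => /eqP hAB.
  have d1 := ct_disj 1 hAB; have dm := ct_disj (k + s - 1) hAB; rewrite !ct1 in d1.
  move: hA hB; rewrite !KE => /andP[/eqP cA hA] /andP[/eqP cB hB].
  have := ct_le_card A (k + s - 1); have := ct_le_card B (k + s - 1); rewrite cA cB.
  have := ct_mono A m1; have := ct_mono B m1; rewrite !ct1.
  rewrite cA in hA; rewrite cB in hB; move: hA hB d1 dm; lia.
- apply: tau_ge => [|T]; first by lia.
  move=> hT; rewrite leqNgt; apply/negP => lt.
  have hX : ct T (k + s - 1) <= s - 1 by have := ct_le_card T (k + s - 1); lia.
  have [D DK hD] := lemmaU s1 mn iK B0K hX.
  move/forall_inP: hT => /(_ D DK).
  by rewrite setIC hD eqxx.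
Qed.

Lemma upper n k s (F : {set {set 'I_n}}) :
  2 * k < n -> 1 <= s -> s <= k -> admissible k s F -> #|F| <= #|Kfam n k s|.
Proof.
move=> kn s1 sk /and4P[fk itF iF tF].
have kn2 : k * 2 < n by lia.
have m1 : 1 <= k + s - 1 by lia.
have mn : k + s - 1 <= n by lia.
have KE := fun K => @KfamE n k s K m1 mn.
have cF : forall A, A \in F -> #|A| = k by move=> A AF; move/forall_inP: fk => /(_ A AF) /eqP.
pose T0 := [set v : 'I_n | v < s - 1].
have iT0 : forall i, inA T0 i = (i < n) && (i < s - 1).
  by apply: (@inA_setP _ (fun i => i < s - 1)) => v; rewrite inE.
have ctT0 : forall x, ct T0 x = minn x (s - 1).
  elim=> [|x IH]; first by rewrite ct0 min0n.
  rewrite ctS IH iT0; lia.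
have cT0 : #|T0| = s - 1 by rewrite -ct_card ctT0; lia.
have B0F : B0 n k s \in F.
  have : ~~ Defs.transversal F T0.
    by apply/negP => hT; have := tau_le hT; rewrite cT0; lia.
  case/forall_inPn => A AF /negPn /eqP hA.
  apply: (initialP iF (card_B0 s1 mn) _ AF).
  apply/precP; split; first by rewrite card_B0 // cF.
  move=> x; rewrite ct_B0 //.
  have := ct_disj x hA; have := ct_le_card A x; rewrite cF // ctT0; lia.
have big : forall X, X \in F -> s <= ct X (k + s - 1).
  move=> X XF; rewrite leqNgt; apply/negP => lt.
  have hX : ct X (k + s - 1) <= s - 1 by lia.
  have [D DF hD] := lemmaU s1 mn iF B0F hX.
  by have := interP itF DF XF; rewrite hD eqxx.
pose Phi := fun X : {set 'I_n} => if X \in Kfam n k s then X else psi X.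
have PK : forall X, X \in F -> X \notin Kfam n k s -> psi X \in Kfam n k s.
  move=> X XF XK.
  have cX := cF X XF; have bX := big X XF.
  have l1 := ct_le_card X (k + s - 1); have l2 := ct_mono X m1; rewrite ct1 in l2.
  move: XK; rewrite (KE X) cX eqxx /= => hK.
  have a0 : inA X 0 = false by move: hK; lia.
  have Np := N0_pos kn2 iF itF XF cX.
  rewrite KE card_psi cX eqxx /= inA_psi a0 Np.
  have [_ hn] := N0_spec X.
  rewrite (leq_ltn_trans (leq0n _) (leq_trans Np hn)) /=.
  case: (leqP (k + s - 1) (N0 X)) => h.
    have := ct_psi_lo h; lia.
  rewrite ct_psi_hi ?(ltnW h) //; lia.
have inj : {in F &, injective Phi}.
  move=> X Y XF YF; rewrite /Phi.
  have nX := psi_notin kn2 iF itF XF (cF X XF).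
  have nY := psi_notin kn2 iF itF YF (cF Y YF).
  case: ifP => hX; case: ifP => hY => hXY.
  - exact: hXY.
  - by move: nY; rewrite -hXY XF.
  - by move: nX; rewrite hXY YF.
  - by move: hXY => /(congr1 (@psi n)); rewrite !psiK.
rewrite -(card_in_imset inj); apply: subset_leq_card.
apply/subsetP => _ /imsetP[X XF ->]; rewrite /Phi.
by case: ifP => // /negbT; apply: PK.
Qed.

Theorem mainTheorem19 (n k s : nat) :
  2 * k < n -> 1 <= s -> s <= k -> g n k s = #|Kfam n k s|.
Proof.
move=> kn s1 sk; apply/eqP; rewrite eqn_leq; apply/andP; split.
  by apply/bigmax_leqP => F hF; apply: upper.
by apply: (@leq_bigmax_cond _ (fun F => admissible k s F) (fun F => #|F|)); apply: Kfam_adm.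
Qed.
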